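(* Let $S$ be a finite set with a total order $<$, $R$ a commutative ring with $1$, $\mathfrak M$ the set of circuits of a loopless matroid without parallel elements on $S$, and $\overline{\mathfrak M}$ its set of Gröbner circuits. Let $E$ be the exterior algebra over $R$ on generators $t_s$, $s\in S$, and identify $t_J$ with its image in $E$. Then the elements $\sum_{\nu=1}^{\#J}(-1)^{\nu-1}t_{J\setminus\{j_\nu\}}$, $J\in\mathfrak M\cap\overline{\mathfrak M}$, form a Gröbner basis (with respect to the degree lexicographic order on the monomials $t_J$) of the defining ideal of the Orlik–Solomon algebra in $E$.
   Context: For $J=\{j_1<\dots<j_{\#J}\}\subseteq S$, $t_J=t_{j_1}\cdots t_{j_{\#J}}$; $E=R\langle t_s\rangle/(t_s^2,\ t_rt_s+t_st_r)$. The defining ideal of the Orlik–Solomon algebra in $E$ is the ideal generated by $\sum_{\nu=1}^{\#J}(-1)^{\nu-1}t_{J\setminus\{j_\nu\}}$ for $J\in\mathfrak M$. Degree lexicographic order on the monomials $t_J$: $t_J<t_K$ iff $\#J<\#K$ or ($\#J=\#K$ and $\min(J\triangle K)\in J$); Gröbner basis means the leading monomials of the given elements generate the ideal generated by the leading monomials of all elements of the ideal. Matroid: circuits have more than two elements, are inclusion-incomparable, satisfy circuit elimination; dependent = contains a circuit. Gröbner circuits $\overline{\mathfrak M}$: defined recursively along this order on subsets; a dependent $J$ is a Gröbner circuit iff no Gröbner circuit $K$ smaller than $J$ has $K\setminus\{k_1\}$ a convex subset of $J\setminus\{j_1\}$ (convex subset: a subset containing every element of the ambient set lying between two of its elements;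 $k_1,j_1$ least elements). *)

(* Defs.v *)
From HB Require Import structures.
From mathcomp Require Import all_boot all_order all_algebra.
Set Implicit Arguments. Unset Strict Implicit. Unset Printing Implicit Defensive.
Import Order.TTheory GRing.Theory.

Local Open Scope ring_scope.

Section Combinatorics.
Context {d : Order.disp_t} {S : finOrderType d}.

Definition convex_in (A B : {set S}) : bool :=
  (A \subset B) &&
  [forall x in A, forall y in A, forall z in B,
     ((x < z)%O && (z < y)%O) ==> (z \in A)].

Definition drop_min (J : {set S}) : {set S} :=
  [set x in J | [exists y in J, (y < x)%O]].

Definition deglex_lt (J K : {set S}) : bool :=
  (#|J| < #|K|)%N ||
  ((#|J| == #|K|) &&
   [exists x in J :\: K, [forall y in (J :\: K) :|: (K :\: J), (x <= y)%O]]).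

(* M is the set of circuits of a loopless matroid without parallel elements:
   circuits have more than two elements, are inclusion-incomparable, and
   satisfy circuit elimination. *)
Definition is_circuit_system (M : {set {set S}}) : Prop :=
  [/\ (forall C, C \in M -> (2 < #|C|)%N),
      (forall C1 C2, C1 \in M -> C2 \in M -> C1 \subset C2 -> C1 = C2) &
      (forall C1 C2 e, C1 \in M -> C2 \in M -> C1 != C2 -> e \in C1 :&: C2 ->
         exists2 C3, C3 \in M & C3 \subset (C1 :|: C2) :\ e)].

Definition dependent (M : {set {set S}}) (J : {set S}) : bool :=
  [exists C in M, C \subset J].

(* Mbar is the set of Groebner circuits of M: the (unique, by well-founded
   recursion along deglex_lt) set satisfying the recursive definition. *)
Definition groebner_circuits_spec (M Mbar : {set {set S}}) : Prop :=
  forall J : {set S},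
    (J \in Mbar) =
    dependent M J &&
    ~~ [exists K in Mbar, deglex_lt K J && convex_in (drop_min K) (drop_min J)].

End Combinatorics.

Section Exterior.
Context {d : Order.disp_t} (S : finOrderType d) (R : comPzRingType).

(* The exterior algebra E over R on generators t_s (s in S), as the free
   R-module with basis the monomials t_J = t_{j_1}...t_{j_k} (J ⊆ S, j_1<...<j_k). *)
Local Notation ext := {ffun {set S} -> R^o}.

Definition tmon (J : {set S}) : ext := [ffun K => (K == J)%:R].

Definition inv_count (J K : {set S}) : nat :=
  #|[set p : S * S | [&& p.1 \in J, p.2 \in K & (p.2 < p.1)%O]]|.

Definition mono_mul (J K : {set S}) : ext :=
  if [disjoint J & K] then (-1) ^+ inv_count J K *: tmon (J :|: K) else 0.

Definition emul (x y : ext) : ext :=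
  \sum_(J : {set S}) \sum_(K : {set S}) (x J * y K) *: mono_mul J K.

Definition gen_ideal (G : ext -> Prop) (x : ext) : Prop :=
  exists n (a g b : 'I_n -> ext),
    (forall i, G (g i)) /\ x = \sum_(i < n) emul (emul (a i) (g i)) (b i).

Definition os_gen (J : {set S}) : ext :=
  \sum_(j in J) (-1) ^+ #|[set i in J | (i < j)%O]| *: tmon (J :\ j).

Definition is_lead (x : ext) (J : {set S}) : Prop :=
  x J != 0 /\ forall K, x K != 0 -> K = J \/ deglex_lt K J.

Definition lead_monomials (P : ext -> Prop) : ext -> Prop :=
  fun m => exists f, P f /\ exists J, is_lead f J /\ m = tmon J.

Definition groebner_basis (G I : ext -> Prop) : Prop :=
  (forall g, G g -> I g) /\
  (forall x, gen_ideal (lead_monomials G) x <-> gen_ideal (lead_monomials I) x).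

Definition os_ideal (M : {set {set S}}) : ext -> Prop :=
  gen_ideal (fun g => exists2 J, J \in M & g = os_gen J).

End Exterior.

Notation ext S R := {ffun {set S} -> R^o}.

(* Main.v *)
Require Import Defs.
From HB Require Import structures.
From mathcomp Require Import all_boot all_order all_algebra.
From mathcomp Require Import zify.
Set Implicit Arguments. Unset Strict Implicit. Unset Printing Implicit Defensive.
Import Order.TTheory GRing.Theory.
Local Open Scope ring_scope.

Section Ext.
Context {d : Order.disp_t} (S : finOrderType d) (R : comPzRingType).
Local Notation ext := {ffun {set S} -> R^o}.
Local Notation tmon := (@tmon d S R).
Local Notation mono_mul := (@mono_mul d S R).
Local Notation emul := (@emul d S R).

Lemma tmonE J K : tmon J K = (K == J)%:R.
Proof. by rewrite ffunE. Qed.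

Lemma ext_expand (x : ext) : x = \sum_K x K *: tmon K.
Proof.
apply/ffunP => K; rewrite sum_ffunE (bigD1 K) //= big1 => [|L /negbTE nL].
  by rewrite ffunE tmonE eqxx addr0; exact: (esym (mulr1 _)).
by rewrite ffunE tmonE eq_sym nL scaler0.
Qed.

Lemma emulDl (x y z : ext) : emul (x + y) z = emul x z + emul y z.
Proof.
rewrite /emul -big_split /=; apply: eq_bigr => J _.
rewrite -big_split; apply: eq_bigr => K _.
by rewrite ffunE mulrDl scalerDl.
Qed.

Lemma emulDr (x y z : ext) : emul x (y + z) = emul x y + emul x z.
Proof.
rewrite /emul -big_split /=; apply: eq_bigr => J _.
rewrite -big_split; apply: eq_bigr => K _.
by rewrite ffunE mulrDr scalerDl.
Qed.

Lemma emulZl c (x y : ext) : emul (c *: x) y = c *: emul x y.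
Proof.
rewrite /emul scaler_sumr; apply: eq_bigr => J _.
rewrite scaler_sumr; apply: eq_bigr => K _.
by rewrite ffunE scalerA mulrA.
Qed.

Lemma emulZr c (x y : ext) : emul x (c *: y) = c *: emul x y.
Proof.
rewrite /emul scaler_sumr; apply: eq_bigr => J _.
rewrite scaler_sumr; apply: eq_bigr => K _.
by rewrite ffunE scalerA mulrCA.
Qed.

Lemma emul0l (y : ext) : emul 0 y = 0.
Proof.
rewrite /emul big1 // => J _; rewrite big1 // => K _.
by rewrite ffunE mul0r scale0r.
Qed.

Lemma emul0r (y : ext) : emul y 0 = 0.
Proof.
rewrite /emul big1 // => J _; rewrite big1 // => K _.
by rewrite ffunE mulr0 scale0r.
Qed.

Lemma emul_suml I (r : seq I) (P : pred I) (F : I -> ext) z :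
  emul (\sum_(i <- r | P i) F i) z = \sum_(i <- r | P i) emul (F i) z.
Proof. exact: (big_morph (fun x => emul x z) (fun x y => emulDl x y z) (emul0l z)). Qed.

Lemma emul_sumr I (r : seq I) (P : pred I) (F : I -> ext) z :
  emul z (\sum_(i <- r | P i) F i) = \sum_(i <- r | P i) emul z (F i).
Proof. exact: (big_morph (fun x => emul z x) (fun x y => emulDr z x y) (emul0r z)). Qed.

Lemma emul_tmon J K : emul (tmon J) (tmon K) = mono_mul J K.
Proof.
rewrite /emul (bigD1 J) //= [X in _ + X]big1 => [|J' nJ']; last first.
  by rewrite big1 // => K' _; rewrite tmonE (negbTE nJ') mul0r scale0r.
rewrite addr0 (bigD1 K) //= big1 => [|K' nK']; last first.
  by rewrite !tmonE (negbTE nK') mulr0 scale0r.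
by rewrite !tmonE !eqxx mulr1 scale1r !addr0.
Qed.

Lemma emul_expand (x y : ext) :
  emul x y = \sum_J \sum_K (x J * y K) *: mono_mul J K.
Proof. by []. Qed.

Lemma inv_countE (J K : {set S}) :
  inv_count J K = (\sum_(x in J) \sum_(y in K) ((y < x)%O : nat))%N.
Proof.
have -> : (\sum_(x in J) \sum_(y in K) ((y < x)%O : nat))%N =
   (\sum_(p : S * S) [&& p.1 \in J, p.2 \in K & (p.2 < p.1)%O])%N.
  rewrite -(pair_big xpredT xpredT (fun x y => [&& x \in J, y \in K & (y < x)%O] : nat)) /=.
  rewrite big_mkcond /=; apply: eq_bigr => x _.
  case: ifP => xJ.
    by rewrite big_mkcond; apply: eq_bigr => y _; case: ifP.
  by rewrite big1 // => y _; rewrite xJ.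
rewrite /inv_count -sum1_card big_mkcond /=; apply: eq_bigr => -[x y] _.
by rewrite inE; case: ifP.
Qed.

Lemma big_setUD (T : finType) (Rr : Type) (idx : Rr) (op : Monoid.com_law idx)
   (A B : {set T}) (F : T -> Rr) :
  [disjoint A & B] ->
  \big[op/idx]_(i in A :|: B) F i = op (\big[op/idx]_(i in A) F i) (\big[op/idx]_(i in B) F i).
Proof. by move=> dAB; rewrite -bigU //; apply: eq_bigl => i; rewrite inE. Qed.

Lemma disjUl (T : finType) (A B C : {set T}) :
  [disjoint A :|: B & C] = [disjoint A & C] && [disjoint B & C].
Proof. by rewrite -!setI_eq0 setIUl setU_eq0. Qed.

Lemma disjUr (T : finType) (A B C : {set T}) :
  [disjoint A & B :|: C] = [disjoint A & B] && [disjoint A & C].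
Proof. by rewrite -!setI_eq0 setIUr setU_eq0. Qed.

Lemma inv_countUl (A B C : {set S}) : [disjoint A & B] ->
  inv_count (A :|: B) C = (inv_count A C + inv_count B C)%N.
Proof. by move=> dAB; rewrite !inv_countE big_setUD. Qed.

Lemma inv_countUr (A B C : {set S}) : [disjoint B & C] ->
  inv_count A (B :|: C) = (inv_count A B + inv_count A C)%N.
Proof.
move=> dBC; rewrite !inv_countE -big_split /=; apply: eq_bigr => x _.
by rewrite big_setUD.
Qed.

Lemma emul_mono_l A B C :
  emul (mono_mul A B) (tmon C) =
  if [disjoint A & B] then (-1) ^+ inv_count A B *: mono_mul (A :|: B) C else 0.
Proof. by rewrite /mono_mul; case: ifP => _; rewrite ?emulZl ?emul_tmon ?emul0l. Qed.

Lemma emul_mono_r A B C :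
  emul (tmon A) (mono_mul B C) =
  if [disjoint B & C] then (-1) ^+ inv_count B C *: mono_mul A (B :|: C) else 0.
Proof. by rewrite /mono_mul; case: ifP => _; rewrite ?emulZr ?emul_tmon ?emul0r. Qed.

Lemma mono_assoc A B C :
  emul (mono_mul A B) (tmon C) = emul (tmon A) (mono_mul B C).
Proof.
rewrite emul_mono_l emul_mono_r /mono_mul disjUl disjUr.
have [dAB|dAB] /= := boolP [disjoint A & B];
have [dBC|dBC] /= := boolP [disjoint B & C];
have [dAC|dAC] /= := boolP [disjoint A & C]; rewrite ?scaler0 //.
rewrite !scalerA -!exprD inv_countUl // inv_countUr // setUA.
by rewrite addnA addnC. Qed.

Lemma emul_expl (x u : ext) : emul x u = \sum_A x A *: emul (tmon A) u.
Proof.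
rewrite {1}(ext_expand x) emul_suml; apply: eq_bigr => A _; by rewrite emulZl.
Qed.

Lemma emul_expr (u z : ext) : emul u z = \sum_C z C *: emul u (tmon C).
Proof.
rewrite {1}(ext_expand z) emul_sumr; apply: eq_bigr => A _; by rewrite emulZr.
Qed.

Lemma emul_assoc (x y z : ext) : emul (emul x y) z = emul x (emul y z).
Proof.
transitivity (\sum_A \sum_B \sum_C (x A * y B * z C) *: emul (tmon A) (mono_mul B C)).
  rewrite emul_expr.
  rewrite (eq_bigr (fun C => \sum_A \sum_B (x A * y B * z C) *: emul (tmon A) (mono_mul B C))); last first.
    move=> C _; rewrite (emul_expl x y) emul_suml scaler_sumr; apply: eq_bigr => A _.
    rewrite emulZl (emul_expr (tmon A) y) emul_suml !scaler_sumr; apply: eq_bigr => B _.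
    by rewrite emulZl emul_tmon mono_assoc !scalerA [z C * _]mulrC.
  rewrite exchange_big /=; apply: eq_bigr => A _.
  by rewrite exchange_big.
rewrite emul_expl; apply: eq_bigr => A _.
rewrite (emul_expl y z) emul_sumr scaler_sumr; apply: eq_bigr => B _.
rewrite emulZr (emul_expr (tmon B) z) emul_sumr !scaler_sumr; apply: eq_bigr => C _.
by rewrite emulZr emul_tmon !scalerA mulrA.
Qed.

Lemma emul1l (x : ext) : emul (tmon set0) x = x.
Proof.
rewrite [x in RHS]ext_expand [x in LHS]ext_expand emul_sumr; apply: eq_bigr => K _.
by rewrite emulZr emul_tmon /mono_mul -setI_eq0 set0I eqxx set0U inv_countE big_set0 expr0 scale1r.
Qed.

Lemma emul1r (x : ext) : emul x (tmon set0) = x.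
Proof.
rewrite [x in RHS]ext_expand [x in LHS]ext_expand emul_suml; apply: eq_bigr => K _.
rewrite emulZl emul_tmon /mono_mul -setI_eq0 setI0 eqxx setU0 inv_countE big1 ?expr0 ?scale1r //.
by move=> i _; rewrite big_set0.
Qed.

Lemma pw_sign (a b : S) (x y : S) : a != b -> x != y ->
 (((b < a)%O : nat) + (((a < b)%O && (y < x)%O) : nat) + (((b < a)%O && (x < y)%O) : nat) =
  ((y < x)%O : nat) + 2 * (((b < a)%O && (x < y)%O) : nat))%N.
Proof.
move=> nab nxy.
case: (ltgtP a b) => hab; last by rewrite hab eqxx in nab.
all: case: (ltgtP x y) => hxy; last by rewrite hxy eqxx in nxy.
all: by [].
Qed.

Lemma sign_even (n w : nat) : (-1) ^+ (n + 2 * w) = (-1) ^+ n :> R.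
Proof. by rewrite -signr_odd oddD mul2n odd_double addbF signr_odd. Qed.

Section Psi.
Variable lv : S -> option S.
Definition pp (a : S) : S := odflt a (lv a).
Definition okm (K : {set S}) : bool :=
  [forall a in K, lv a != None] && [forall a in K, forall b in K, (pp a == pp b) ==> (a == b)].
Definition invp (K : {set S}) : nat :=
  (\sum_(a in K) \sum_(b in K) (((a < b)%O && (pp b < pp a)%O) : nat))%N.
Definition psim (K : {set S}) : ext :=
  if okm K then (-1) ^+ invp K *: tmon (pp @: K) else 0.
Definition psi (x : ext) : ext := \sum_K x K *: psim K.

Lemma okm_inj (K : {set S}) : okm K -> {in K &, injective pp}.
Proof.
case/andP=> _ /forallP H a b aK bK eab.
by move: (H a); rewrite aK /= => /forallP/(_ b); rewrite bK eab eqxx /= => /eqP.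
Qed.

Lemma okm_def (K : {set S}) a : okm K -> a \in K -> lv a = Some (pp a).
Proof.
case/andP=> /forallP/(_ a) + _ aK; rewrite aK /= /pp.
by case: (lv a).
Qed.

Lemma okmP (K : {set S}) : (forall a, a \in K -> lv a != None) -> {in K &, injective pp} -> okm K.
Proof.
move=> H1 H2; apply/andP; split; apply/forallP => a; apply/implyP => aK.
  exact: H1.
apply/forallP => b; apply/implyP => bK; apply/implyP => /eqP e.
by rewrite (H2 a b aK bK e).
Qed.

Lemma okm_sub (A B : {set S}) : A \subset B -> okm B -> okm A.
Proof.
move=> sAB oB; apply: okmP.
  by move=> a aA; rewrite (okm_def oB (subsetP sAB a aA)).
by move=> a b aA bA; apply: (okm_inj oB); apply: (subsetP sAB).
Qed.

Lemma psiD x y : psi (x + y) = psi x + psi y.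
Proof. by rewrite /psi -big_split; apply: eq_bigr => K _; rewrite ffunE scalerDl. Qed.
Lemma psiZ c x : psi (c *: x) = c *: psi x.
Proof. by rewrite /psi scaler_sumr; apply: eq_bigr => K _; rewrite ffunE scalerA. Qed.
Lemma psi0 : psi 0 = 0.
Proof. by rewrite /psi big1 // => K _; rewrite ffunE scale0r. Qed.
Lemma psi_sum I (r : seq I) (P : pred I) (F : I -> ext) :
  psi (\sum_(i <- r | P i) F i) = \sum_(i <- r | P i) psi (F i).
Proof. exact: (big_morph psi psiD psi0). Qed.
Lemma psi_tmon K : psi (tmon K) = psim K.
Proof.
rewrite /psi (bigD1 K) //= big1 => [|L nL]; last by rewrite tmonE (negbTE nL) scale0r.
by rewrite tmonE eqxx scale1r addr0.
Qed.

Definition ipair (A B : {set S}) : nat :=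
  (\sum_(a in A) \sum_(b in B) (((a < b)%O && (pp b < pp a)%O) : nat))%N.

Lemma invp_split (A B : {set S}) : [disjoint A & B] ->
  invp (A :|: B) = (invp A + ipair A B + (ipair B A + invp B))%N.
Proof.
move=> dAB; rewrite /invp /ipair big_setUD //.
rewrite (eq_bigr (fun a => \sum_(b in A) (((a < b)%O && (pp b < pp a)%O) : nat) +
     \sum_(b in B) (((a < b)%O && (pp b < pp a)%O) : nat))%N); last by move=> a _; rewrite big_setUD.
rewrite big_split /=; congr (_ + _)%N.
by rewrite -big_split /=; apply: eq_bigr => a _; rewrite big_setUD.
Qed.

Lemma invpU (A B : {set S}) : [disjoint A & B] -> okm (A :|: B) ->
  (inv_count A B + invp (A :|: B) =
   invp A + invp B + inv_count (pp @: A) (pp @: B) +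
   2 * \sum_(a in A) \sum_(b in B) (((b < a)%O && (pp a < pp b)%O) : nat))%N.
Proof.
move=> dAB oU.
have iA : {in A &, injective pp} by apply: okm_inj; apply: okm_sub oU; apply: subsetUl.
have iB : {in B &, injective pp} by apply: okm_inj; apply: okm_sub oU; apply: subsetUr.
have iU := okm_inj oU.
have -> : inv_count (pp @: A) (pp @: B) =
    (\sum_(a in A) \sum_(b in B) ((pp b < pp a)%O : nat))%N.
  by rewrite inv_countE (big_imset _ iA); apply: eq_bigr => a _; rewrite (big_imset _ iB).
rewrite inv_countE.
rewrite invp_split //.
have -> : ipair B A = (\sum_(a in A) \sum_(b in B) (((b < a)%O && (pp a < pp b)%O) : nat))%N.
  by rewrite /ipair exchange_big.
rewrite /ipair.
set X := (\sum_(i in A) \sum_(b in B) (((i < b)%O && _) : nat))%N.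
set Y := (\sum_(i in A) \sum_(b in B) (((b < i)%O && _) : nat))%N.
have HH : (\sum_(x in A) \sum_(y in B) ((y < x)%O : nat) + X + Y =
           \sum_(a in A) \sum_(b in B) ((pp b < pp a)%O : nat) +
           2 * \sum_(a in A) \sum_(b in B) (((b < a)%O && (pp a < pp b)%O) : nat))%N.
  rewrite /X /Y -!big_split big_distrr /= -big_split /=; apply: eq_bigr => a aA.
  rewrite -!big_split big_distrr /= -big_split /=; apply: eq_bigr => b bB.
  apply: pw_sign.
    by apply/eqP => eab; move: dAB; rewrite -setI_eq0 => /eqP/setP/(_ a); rewrite !inE aA eab bB.
  apply/eqP => epp.
  have aU : a \in A :|: B by rewrite inE aA.
  have bU : b \in A :|: B by rewrite inE bB orbT.
  have eab := iU _ _ aU bU epp.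
  by move: dAB; rewrite -setI_eq0 => /eqP/setP/(_ a); rewrite !inE aA eab bB.
move: HH; rewrite /X /Y; lia.
Qed.

Lemma psim_not (K : {set S}) : okm K = false -> psim K = 0.
Proof. by rewrite /psim => ->. Qed.

Lemma psim_mul (A B : {set S}) : psi (mono_mul A B) = emul (psim A) (psim B).
Proof.
have psiU0 : ~~ okm (A :|: B) -> psi (mono_mul A B) = 0.
  move=> nU; rewrite /mono_mul; case: ifP => _; last by rewrite psi0.
  by rewrite psiZ psi_tmon psim_not ?scaler0 //; apply/negbTE.
case oA: (okm A); last first.
  rewrite (psim_not oA) emul0l psiU0 //; apply/negP => oU.
  by move: oA; rewrite (okm_sub _ oU) // subsetUl.
case oB: (okm B); last first.
  rewrite (psim_not oB) emul0r psiU0 //; apply/negP => oU.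
  by move: oB; rewrite (okm_sub _ oU) // subsetUr.
have iA := okm_inj oA; have iB := okm_inj oB.
rewrite /psim oA oB emulZl emulZr emul_tmon scalerA /mono_mul.
case dAB: [disjoint A & B]; last first.
  rewrite psi0; case: ifP => dp; last by rewrite scaler0.
  exfalso; move/negbT: dAB; rewrite -setI_eq0 => /set0Pn [x].
  rewrite inE => /andP [xA xB].
  move: dp; rewrite -setI_eq0 => /eqP/setP/(_ (pp x)).
  by rewrite !inE !imset_f.
rewrite psiZ psi_tmon /psim.
case oU: (okm (A :|: B)).
  have iU := okm_inj oU.
  have dp : [disjoint pp @: A & pp @: B].
    rewrite -setI_eq0; apply/eqP/setP => y; rewrite !inE.
    apply/negP => /andP [/imsetP [a aA ->] /imsetP [b bB eab]].
    have ab : a = b by apply: iU; rewrite ?inE ?aA ?bB ?orbT.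
    by move: dAB; rewrite -setI_eq0 => /eqP/setP/(_ a); rewrite !inE aA ab bB.
  rewrite dp imsetU !scalerA -!exprD; congr (_ *: _).
  by rewrite invpU // sign_even.
rewrite scaler0; case: ifP => dp; last by rewrite scaler0.
suff: okm (A :|: B) by rewrite oU.
apply: okmP.
  move=> a; rewrite inE => /orP [] aX.
    by rewrite (okm_def oA aX).
  by rewrite (okm_def oB aX).
move=> a b; rewrite !inE => /orP [] aX /orP [] bX e.
- exact: iA.
- move: dp; rewrite -setI_eq0 => /eqP/setP/(_ (pp a)).
  by rewrite !inE (imset_f pp aX) e (imset_f pp bX).
- move: dp; rewrite -setI_eq0 => /eqP/setP/(_ (pp a)).
  by rewrite !inE (imset_f pp aX) e (imset_f pp bX).
- exact: iB.
Qed.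

Lemma psi_emul (x y : ext) : psi (emul x y) = emul (psi x) (psi y).
Proof.
have pd : forall z, psi z = \sum_K z K *: psim K by [].
rewrite emul_expand psi_sum [psi x]pd emul_suml; apply: eq_bigr => J _.
rewrite psi_sum emulZl [psi y]pd emul_sumr scaler_sumr; apply: eq_bigr => K _.
by rewrite psiZ psim_mul emulZr scalerA.
Qed.

Lemma card_sum (C : {set S}) (P : pred S) :
  #|[set i in C | P i]| = (\sum_(i in C) (P i : nat))%N.
Proof.
rewrite -sum1_card big_mkcond [RHS]big_mkcond /=; apply: eq_bigr => i _.
by rewrite !inE; case: (i \in C); case: (P i).
Qed.

Lemma even_sum (X : {set S}) (f : S -> nat) :
  (forall x, x \in X -> ~~ odd (f x)) -> ~~ odd (\sum_(x in X) f x)%N.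
Proof.
move=> H; apply: (big_ind (fun n => ~~ odd n)) => //.
  by move=> m n /negbTE hm /negbTE hn; rewrite oddD hm hn.
Qed.

Lemma pw_even (a b x q px : S) : (a < b)%O -> x != a -> x != b -> px != q ->
  ~~ odd (((x < a)%O : nat) + ((x < b)%O : nat) +
          (((b < x)%O && (px < q)%O) : nat) + (((x < b)%O && (q < px)%O) : nat) +
          (((a < x)%O && (px < q)%O) : nat) + (((x < a)%O && (q < px)%O) : nat))%N.
Proof.
move=> ab xa xb pq.
case: (ltgtP px q) => hp; last by rewrite hp eqxx in pq.
all: case: (ltgtP x a) => hxa; last by rewrite hxa eqxx in xa.
all: case: (ltgtP x b) => hxb; last by rewrite hxb eqxx in xb.
all: rewrite //=.
all: try by move: (lt_trans hxa ab); rewrite ltNge le_eqVlt hxb orbT.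
all: try by move: (lt_trans ab hxb); rewrite ltNge le_eqVlt hxa orbT.
Qed.

Lemma invp1 (b : S) : invp [set b] = 0%N.
Proof. by rewrite /invp big_set1 big_set1 ltxx. Qed.

Lemma invp_add1 (b : S) (X : {set S}) : b \notin X ->
  invp (b |: X) = (invp X + \sum_(x in X) ((((b < x)%O && (pp x < pp b)%O) : nat) +
                   (((x < b)%O && (pp b < pp x)%O) : nat)))%N.
Proof.
move=> bX; rewrite invp_split; last first.
  rewrite -setI_eq0; apply/eqP/setP => y; rewrite !inE.
  by case: eqP => // ->; rewrite (negbTE bX).
rewrite invp1 /ipair big_set1 big_split /=.
under [X in (_ + (X + _))%N]eq_bigr => x _ do rewrite big_set1.
by rewrite add0n [RHS]addnC addnA.
Qed.

Lemma sign_cancel (e1 e2 : nat) : odd (e1 + e2) -> (-1) ^+ e1 + (-1) ^+ e2 = 0 :> R.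
Proof.
rewrite -(signr_odd R e1) -(signr_odd R e2) oddD.
by case: (odd e1); case: (odd e2) => //= _; rewrite ?expr0 ?expr1 ?addrN ?addNr.
Qed.

Lemma okm_swap (C : {set S}) a b : (forall x, x \in C -> lv x != None) ->
  a \in C -> b \in C -> a != b -> pp a = pp b ->
  okm (C :\ a) -> okm (C :\ b).
Proof.
move=> Cdef aC bC nab pab oa; apply: okmP.
  by move=> x; rewrite !inE => /andP [_ xC]; apply: Cdef.
have ia := okm_inj oa.
pose sg x := if x == a then b else x.
have sgC : forall x, x \in C :\ b -> sg x \in C :\ a.
  move=> x; rewrite !inE /sg => /andP [xb xC]; case: (eqVneq x a) => [_|xa].
    by rewrite eq_sym nab bC.
  by rewrite xa xC.
have psg : forall x, pp (sg x) = pp x by move=> x; rewrite /sg; case: eqP => // ->.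
move=> x y xC yC e.
have := ia _ _ (sgC _ xC) (sgC _ yC); rewrite !psg => /(_ e).
move: xC yC; rewrite !inE /sg => /andP [xb _] /andP [yb _].
case: eqP => [->|_]; case: eqP => [->|_] //.
- by move=> eb; rewrite eb eqxx in yb.
- by move=> eb; rewrite -eb eqxx in xb.
Qed.

Lemma pimg_del (C : {set S}) a b : b \in C -> b != a -> pp a = pp b ->
  pp @: (C :\ a) = pp @: C.
Proof.
move=> bC ba pab; apply/setP => y; apply/imsetP/imsetP => [[x] | [x xC ->]].
  by rewrite !inE => /andP [_ xC] ->; exists x.
case: (eqVneq x a) => [->|xa].
  by exists b; rewrite ?inE ?ba.
by exists x; rewrite ?inE ?xa.
Qed.

Lemma psi_osgen_sum (C : {set S}) :
  psi (os_gen R C) = \sum_(j in C) (-1) ^+ #|[set i in C | (i < j)%O]| *: psim (C :\ j).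
Proof. by rewrite /os_gen psi_sum; apply: eq_bigr => j _; rewrite psiZ psi_tmon. Qed.

Lemma pair_cancel (C : {set S}) a b : (forall x, x \in C -> lv x != None) ->
  a \in C -> b \in C -> (a < b)%O -> pp a = pp b -> psi (os_gen R C) = 0.
Proof.
move=> Cdef aC bC ab pab.
have nab : a != b by rewrite lt_neqAle in ab; case/andP: ab.
have nba : b != a by rewrite eq_sym.
rewrite psi_osgen_sum (bigD1 a) //= (bigD1 b) /=; last by rewrite bC nba.
rewrite big1 => [|j /andP [/andP [jC ja] jb]]; last first.
  rewrite /psim; case: ifP => oj; last by rewrite scaler0.
  have := okm_inj oj; move=> /(_ a b); rewrite !inE aC bC eq_sym ja eq_sym jb => /(_ isT isT pab) e.
  by rewrite e eqxx in nab.
rewrite addr0.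
case oa: (okm (C :\ a)); last first.
  have ob : okm (C :\ b) = false.
    apply/negP => ob; move: oa; rewrite (okm_swap Cdef bC aC nba (esym pab) ob) //.
  by rewrite !psim_not // !scaler0 addr0.
have ob := okm_swap Cdef aC bC nab pab oa.
rewrite /psim oa ob (pimg_del bC nba pab) (pimg_del aC nab (esym pab)) !scalerA -!exprD.
rewrite -scalerDl sign_cancel ?scale0r //.
set X := C :\ a :\ b.
have bX : b \notin X by rewrite !inE eqxx.
have aX : a \notin X by rewrite !inE eqxx andbF.
have eCa : C :\ a = b |: X.
  apply/setP => y; rewrite !inE; case: (eqVneq y b) => [->|yb] //=; by rewrite nba bC.
have eCb : C :\ b = a |: X.
  apply/setP => y; rewrite !inE; case: (eqVneq y a) => [->|ya] //=; first by rewrite nab aC.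
have abX : a \notin b |: X.
  by rewrite in_setU1 (negbTE nab) (negbTE aX).
have eC : C = a |: (b |: X) by rewrite -eCa; apply/setP => y; rewrite !inE; case: eqP => // ->.
have hna : #|[set i in C | (i < a)%O]| = (\sum_(x in X) ((x < a)%O : nat))%N.
  by rewrite card_sum eC big_setU1 // big_setU1 //= ltxx ltNge (ltW ab).
have hnb : #|[set i in C | (i < b)%O]| = (1 + \sum_(x in X) ((x < b)%O : nat))%N.
  by rewrite card_sum eC big_setU1 // big_setU1 //= ltxx ab.
have hia := invp_add1 bX; rewrite -eCa in hia.
have hib := invp_add1 aX; rewrite -eCb in hib.
rewrite hna hnb hia hib -pab.
set q := pp a.
have HH : ~~ odd (\sum_(x in X) (((x < a)%O : nat) + ((x < b)%O : nat) +
          (((b < x)%O && (pp x < q)%O) : nat) + (((x < b)%O && (q < pp x)%O) : nat) +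
          (((a < x)%O && (pp x < q)%O) : nat) + (((x < a)%O && (q < pp x)%O) : nat)))%N.
  apply: even_sum => x xX; apply: pw_even => //.
  - by apply/eqP => e; rewrite e (negbTE aX) in xX.
  - by apply/eqP => e; rewrite e (negbTE bX) in xX.
  apply/eqP => e; have := okm_inj oa; move=> /(_ x b).
  rewrite eCa !in_setU1 eqxx xX orbT => /(_ isT isT); rewrite e /q pab => /(_ erefl) exb.
  by rewrite exb (negbTE bX) in xX.
move: HH; rewrite !big_split /=.
rewrite !oddD /=.
by case: (odd (invp X)); case: (odd _); case: (odd _); case: (odd _); case: (odd _);
  case: (odd _); case: (odd _).
Qed.

Definition ole (o1 o2 : option S) : bool :=
  if o1 is Some x then (if o2 is Some y then (x <= y)%O else false) else true.

Lemma ex_minP (T : finType) (X : {set T}) (f : T -> S) x0 : x0 \in X ->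
  exists2 x, x \in X & forall y, y \in X -> (f x <= f y)%O.
Proof. by move=> x0X; case: (arg_minP f x0X) => x xX H; exists x. Qed.

Lemma ex_maxP (T : finType) (X : {set T}) (f : T -> S) x0 : x0 \in X ->
  exists2 x, x \in X & forall y, y \in X -> (f y <= f x)%O.
Proof. by move=> x0X; case: (arg_maxP f x0X) => x xX H; exists x. Qed.

Lemma psi_osgen (C : {set S}) :
  (forall c0, c0 \in C -> exists2 c, c \in C & (c != c0) && ole (lv c) (lv c0)) ->
  psi (os_gen R C) = 0.
Proof.
move=> HK.
case: (boolP [exists c in C, lv c == None]) => [/existsP [c0 /andP [c0C /eqP c0N]] | /existsPn Hdef].
  case: (HK c0 c0C) => c cC /andP [cc0]; rewrite c0N; case E: (lv c) => //= _.
  rewrite psi_osgen_sum big1 // => j jC; rewrite psim_not ?scaler0 //.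
  apply/negP => oj; case: (eqVneq j c0) => [jc0|jc0].
    have := okm_def oj (a := c); rewrite E !inE cC jc0 cc0 => /(_ isT).
    by [].
  have := okm_def oj (a := c0); rewrite c0N !inE c0C eq_sym jc0 => /(_ isT).
  by [].
have Cdef : forall x, x \in C -> lv x != None.
  by move=> x xC; move: (Hdef x); rewrite xC.
case: (set_0Vmem C) => [-> | [x0 x0C]].
  by rewrite psi_osgen_sum big_set0.
case: (ex_minP pp x0C) => c0 c0C Hmin.
case: (HK c0 c0C) => c cC /andP [cc0].
have dc := Cdef c cC; have dc0 := Cdef c0 c0C.
rewrite (okm_def (K := [set c]) (a := c)) ?inE //; last first.
  by apply: okmP => [y /set1P -> | y z /set1P -> /set1P ->].
rewrite (okm_def (K := [set c0]) (a := c0)) ?inE //=; last first.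
  by apply: okmP => [y /set1P -> | y z /set1P -> /set1P ->].
move=> le1; have e : pp c = pp c0 by apply/le_anti; rewrite le1 Hmin.
case: (ltgtP c c0) => hc.
- exact: (pair_cancel Cdef cC c0C hc e).
- exact: (pair_cancel Cdef c0C cC hc (esym e)).
- by rewrite hc eqxx in cc0.
Qed.

End Psi.

Section Matroid.
Variable M : {set {set S}}.
Hypothesis hM : is_circuit_system M.

Definition cl (X : {set S}) : {set S} :=
  [set y | (y \in X) || [exists C in M, (y \in C) && (C \subset y |: X)]].

Lemma cl_ext (X : {set S}) : X \subset cl X.
Proof. by apply/subsetP => x xX; rewrite inE xX. Qed.

Lemma cl_mono (X Y : {set S}) : X \subset Y -> cl X \subset cl Y.
Proof.
move=> sXY; apply/subsetP => y; rewrite !inE => /orP [yX|/existsP [C /andP [CM /andP [yC sC]]]].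
  by rewrite (subsetP sXY _ yX).
apply/orP; right; apply/existsP; exists C; rewrite CM yC /=.
by apply: (subset_trans sC); apply: setUS.
Qed.

Lemma cl_circ (C : {set S}) c (X : {set S}) : C \in M -> c \in C -> C :\ c \subset X -> c \in cl X.
Proof.
move=> CM cC sCX; rewrite inE; apply/orP; right; apply/existsP; exists C.
rewrite CM cC /=; apply/subsetP => x xC; rewrite !inE.
by case: eqP => //= /eqP xc; apply: (subsetP sCX); rewrite !inE xc.
Qed.

Lemma strong_elim n : forall (C1 C2 : {set S}) e f, (#|C1 :|: C2| <= n)%N ->
  C1 \in M -> C2 \in M -> C1 != C2 -> e \in C1 -> e \in C2 -> f \in C1 -> f \notin C2 ->
  exists2 C3, C3 \in M & (f \in C3) && (C3 \subset (C1 :|: C2) :\ e).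
Proof.
case: hM => _ hinc helim.
elim: n => [|n IH] C1 C2 e f hn C1M C2M C12 eC1 eC2 fC1 fC2.
  by move: hn; rewrite leqn0 cards_eq0 => /eqP/setP/(_ e); rewrite !inE eC1.
have [C3 C3M sC3] := helim C1 C2 e C1M C2M C12 (introT setIP (conj eC1 eC2)).
case fC3: (f \in C3); first by exists C3; rewrite // fC3.
have nsub : ~~ (C3 \subset C1).
  by apply/negP => s31; move: fC3; rewrite (hinc _ _ C3M C1M s31) fC1.
case/subsetPn: nsub => g gC3 gC1.
have gC2 : g \in C2.
  by move: (subsetP sC3 g gC3); rewrite !inE (negbTE gC1) /= => /andP [_].
have eC3 : e \notin C3.
  by apply/negP => eC3; move: (subsetP sC3 e eC3); rewrite !inE eqxx.
have C23 : C2 != C3 by apply/negP => /eqP E; rewrite -E eC2 in eC3.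
have sC3U : C3 \subset C1 :|: C2.
  by apply/subsetP => x xC3; move: (subsetP sC3 x xC3); rewrite !inE => /andP [].
have h1 : (#|C2 :|: C3| <= n)%N.
  rewrite -ltnS; apply: leq_trans hn; apply: proper_card; apply/properP; split.
    by rewrite subUset subsetUr sC3U.
  by exists f; rewrite !inE ?fC1 // negb_or fC2 fC3.
have [C4 C4M /andP [eC4 sC4]] := IH C2 C3 g e h1 C2M C3M C23 gC2 gC3 eC2 eC3.
have fC4 : f \notin C4.
  by apply/negP => fC4; move: (subsetP sC4 f fC4); rewrite !inE (negbTE fC2) fC3 andbF.
have gC4 : g \notin C4.
  by apply/negP => gC4; move: (subsetP sC4 g gC4); rewrite !inE eqxx.
have C14 : C1 != C4 by apply/negP => /eqP E; rewrite -E fC1 in fC4.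
have sC4U : C4 \subset C1 :|: C2.
  apply/subsetP => x xC4; move: (subsetP sC4 x xC4); rewrite !inE => /andP [_ /orP [] xC].
    by rewrite xC orbT.
  by move: (subsetP sC3U x xC); rewrite inE.
have h2 : (#|C1 :|: C4| <= n)%N.
  rewrite -ltnS; apply: leq_trans hn; apply: proper_card; apply/properP; split.
    by rewrite subUset subsetUl sC4U.
  by exists g; rewrite !inE ?gC2 ?orbT // negb_or gC1 gC4.
have [C5 C5M /andP [fC5 sC5]] := IH C1 C4 e f h2 C1M C4M C14 eC1 eC4 fC1 fC4.
exists C5 => //; rewrite fC5 /=; apply/subsetP => x xC5.
move: (subsetP sC5 x xC5); rewrite !inE => /andP [-> /orP [] xC] //=.
  by rewrite xC.
by move: (subsetP sC4U x xC); rewrite inE.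
Qed.

Lemma cl_idem_aux k : forall (X : {set S}) y (C : {set S}), (#|C :\: X| <= k)%N -> C \in M -> y \in C ->
  C \subset y |: cl X -> y \in cl X.
Proof.
elim: k => [|k IH] X y C hk CM yC sC.
  rewrite inE; apply/orP; right; apply/existsP; exists C; rewrite CM yC /=.
  apply/subsetP => x xC; move: hk; rewrite leqn0 cards_eq0 => /eqP/setP/(_ x).
  by rewrite !inE xC andbT => /negbFE ->; rewrite orbT.
apply/negPn/negP => yX.
case: (boolP (C \subset y |: X)) => [sCX|/subsetPn [z zC zX]].
  apply: (negP yX); by rewrite inE; apply/orP; right; apply/existsP; exists C; rewrite CM yC.
move: zX; rewrite !inE negb_or => /andP [zy zX].
have zcl : z \in cl X by move: (subsetP sC z zC); rewrite !inE (negbTE zy).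
move: (zcl); rewrite inE (negbTE zX) /= => /existsP [D /andP [DM /andP [zD sD]]].
have yX' : y \notin X by apply/negP => yX'; move: yX; rewrite inE yX'.
have yD : y \notin D.
  by apply/negP => yD; move: (subsetP sD y yD); rewrite !inE eq_sym (negbTE zy) (negbTE yX').
have CD : C != D by apply/negP => /eqP E; rewrite -E yC in yD.
have [C3 C3M /andP [yC3 sC3]] := strong_elim (leqnn _) CM DM CD zC zD yC yD.
apply: (negP yX); apply: (IH X y C3) => //.
  rewrite -ltnS; apply: leq_trans hk; apply: proper_card; apply/properP; split.
    apply/subsetP => x; rewrite !inE => /andP [xX xC3].
    move: (subsetP sC3 x xC3); rewrite !inE => /andP [xz /orP [] xC]; first by rewrite xX xC.
    by move: (subsetP sD x xC); rewrite !inE (negbTE xz) (negbTE xX).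
  exists z; first by rewrite !inE zX zC.
  by rewrite !inE zX /=; apply/negP => zC3; move: (subsetP sC3 z zC3); rewrite !inE eqxx.
apply/subsetP => x xC3; move: (subsetP sC3 x xC3); rewrite !inE => /andP [xz /orP [] xC].
  by move: (subsetP sC x xC); rewrite !inE.
move: (subsetP sD x xC); rewrite !inE (negbTE xz) /= => xX.
by rewrite xX orbT.
Qed.

Lemma cl_idem (X : {set S}) : cl (cl X) \subset cl X.
Proof.
apply/subsetP => y; rewrite [y \in cl (cl X)]inE => /orP [//|/existsP [C /andP [CM /andP [yC sC]]]].
exact: (cl_idem_aux (leqnn _) CM yC sC).
Qed.

Section Level.
Variable J : {set S}.
Hypothesis hnbc : forall C, C \in M -> ~~ (drop_min C \subset J).

Definition Jge (j : S) : {set S} := [set x in J | (j <= x)%O].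
Definition U (j : S) : {set S} := cl (Jge j).
Definition lvl (y : S) : option S :=
  [pick j in J | (y \in U j) && [forall j' in J, (j < j')%O ==> (y \notin U j')]].

Lemma U_anti j j' : (j <= j')%O -> U j' \subset U j.
Proof.
move=> jj'; apply: cl_mono; apply/subsetP => x; rewrite !inE => /andP [-> h] /=.
exact: le_trans jj' h.
Qed.

Lemma lvl_some y j : lvl y = Some j ->
  [/\ j \in J, y \in U j & forall j', j' \in J -> (j < j')%O -> y \notin U j'].
Proof.
rewrite /lvl; case: pickP => // j0 /andP [j0J /andP [yU /forallP H]] [<-].
split=> // j' j'J jj'; move: (H j'); rewrite j'J /= => /implyP; exact.
Qed.

Lemma lvl_ge y j0 : j0 \in J -> y \in U j0 ->
  exists2 j, lvl y = Some j & (j0 <= j)%O.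
Proof.
move=> j0J yU.
have j0T : j0 \in [set j in J | y \in U j] by rewrite inE j0J yU.
case: (ex_maxP id j0T) => j1; rewrite inE => /andP [j1J yU1] Hmax.
have Pj1 : (j1 \in J) && ((y \in U j1) && [forall j' in J, (j1 < j')%O ==> (y \notin U j')]).
  rewrite j1J yU1 /=; apply/forallP => j'; apply/implyP => j'J; apply/implyP => lt1.
  apply/negP => yU'.
  have := Hmax j'; rewrite inE j'J yU' => /(_ isT) le'.
  by move: (lt_le_trans lt1 le'); rewrite ltxx.
rewrite /lvl; case: pickP => [j /andP [jJ /andP [yUj /forallP Hj]]|/(_ j1)]; last by rewrite Pj1.
exists j => //; case: (leP j0 j) => // lt.
have := Hj j1; rewrite j1J /= => /implyP H.
have lt' : (j < j1)%O by apply: lt_le_trans lt (Hmax j0 j0T).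
by move: (H lt'); rewrite yU1.
Qed.

Lemma drop_min_sub (C : {set S}) : drop_min C \subset C.
Proof. by apply/subsetP => x; rewrite inE => /andP []. Qed.

Lemma no_circ_in_J (C : {set S}) : C \in M -> C \subset J -> False.
Proof.
move=> CM sCJ; move: (hnbc CM); rewrite (subset_trans (drop_min_sub C) sCJ).
by [].
Qed.

Lemma no_broken (C : {set S}) y : C \in M -> y \in C -> (forall c, c \in C -> c != y -> (y < c)%O) ->
  C :\ y \subset J -> False.
Proof.
move=> CM yC Hy sJ; move: (hnbc CM) => /negP; apply; apply: subset_trans sJ.
apply/subsetP => x; rewrite !inE => /andP [xC /existsP [z /andP [zC zx]]].
rewrite xC andbT; apply/negP => /eqP xy; rewrite xy in zx.
case: (eqVneq z y) => [zy|zy]; first by rewrite zy ltxx in zx.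
by move: (lt_trans zx (Hy z zC zy)); rewrite ltxx.
Qed.

Lemma lvl_J j : j \in J -> lvl j = Some j.
Proof.
move=> jJ.
have jU : j \in U j by apply: (subsetP (cl_ext _)); rewrite inE jJ lexx.
case: (lvl_ge jJ jU) => j1 e1 le1.
case: (lvl_some e1) => j1J jU1 _.
case: (eqVneq j j1) => [ej|nj]; first by rewrite e1 ej.
have lt1 : (j < j1)%O by rewrite lt_neqAle nj le1.
move: jU1; rewrite inE => /orP [|/existsP [C /andP [CM /andP [jC sC]]]].
  by rewrite inE jJ /= leNgt lt1.
exfalso; apply: (no_circ_in_J CM); apply: (subset_trans sC).
apply/subsetP => x; rewrite !inE => /orP [/eqP -> //|/andP [] //].
Qed.

Lemma lvl_le y j : lvl y = Some j -> (j <= y)%O.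
Proof.
move=> e; case: (lvl_some e) => jJ yU _.
rewrite leNgt; apply/negP => yj.
move: yU; rewrite inE => /orP [|/existsP [C /andP [CM /andP [yC sC]]]].
  by rewrite inE leNgt yj andbF.
apply: (no_broken CM yC).
  move=> c cC cy; move: (subsetP sC c cC); rewrite !inE (negbTE cy) /= => /andP [_ jc].
  exact: lt_le_trans yj jc.
apply/subsetP => x; rewrite !inE => /andP [xy xC]; move: (subsetP sC x xC).
by rewrite !inE (negbTE xy) /= => /andP [].
Qed.

Lemma lvl_K (C : {set S}) : C \in M -> forall c0, c0 \in C ->
  exists2 c, c \in C & (c != c0) && ole (lvl c) (lvl c0).
Proof.
move=> CM c0 c0C.
case: hM => hsz _ _.
case: (boolP [exists c in C, (c != c0) && ole (lvl c) (lvl c0)]) =>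
  [/exists_inP [c cC h] | /exists_inPn H]; first by exists c.
exfalso.
pose q c := odflt c (lvl c).
have Hq : forall c, c \in C :\ c0 -> lvl c = Some (q c) /\ ~~ ole (lvl c) (lvl c0).
  move=> c; rewrite !inE => /andP [cc0 cC]; move: (H c cC); rewrite cc0 /= /q.
  by case: (lvl c) => //= a ->.
case: (set_0Vmem (C :\ c0)) => [E|[x0 x0C]].
  move: (hsz C CM); rewrite (cardsD1 c0) c0C E cards0 //.
case: (ex_minP q x0C) => c1 c1C Hmin.
have [e1 _] := Hq c1 c1C.
have sU : C :\ c0 \subset U (q c1).
  apply/subsetP => c cC; have [ec _] := Hq c cC.
  case: (lvl_some ec) => _ cU _.
  exact: (subsetP (U_anti (Hmin c cC)) c cU).
have c0U : c0 \in U (q c1) by apply: (subsetP (cl_idem _)); apply: cl_circ CM c0C sU.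
case: (lvl_some e1) => j1J _ _.
case: (lvl_ge j1J c0U) => j e0 le0.
by have [_] := Hq c1 c1C; rewrite e1 e0 /= le0.
Qed.

Lemma psi_ideal (f : ext) : os_ideal M f -> psi lvl f = 0.
Proof.
case=> n [a [g [b [Hg ->]]]].
rewrite psi_sum big1 // => i _; rewrite !psi_emul.
have [C CM ->] := Hg i.
by rewrite (psi_osgen (lvl_K CM)) emul0r emul0l.
Qed.

Lemma pp_J j : j \in J -> pp lvl j = j.
Proof. by move=> jJ; rewrite /pp lvl_J. Qed.

Lemma okm_J : okm lvl J.
Proof.
apply: okmP => [j jJ|x y xJ yJ]; first by rewrite lvl_J.
by rewrite !pp_J.
Qed.

Lemma psim_J : psim lvl J = tmon J.
Proof.
rewrite /psim okm_J.
have -> : invp lvl J = 0%N.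
  rewrite /invp big1 // => a aJ; rewrite big1 // => b bJ.
  rewrite !pp_J //; case: (ltP a b) => //= ab.
  by rewrite ltNge (ltW ab).
have -> : pp lvl @: J = J.
  by rewrite (eq_in_imset (g := id)) ?imset_id // => x xJ; rewrite pp_J.
by rewrite expr0 scale1r.
Qed.

Lemma psim_K K : deglex_lt K J -> psim lvl K J = 0.
Proof.
move=> hK; rewrite /psim; case: ifP => oK; last by rewrite ffunE.
rewrite ffunE tmonE.
case: (eqVneq J (pp lvl @: K)) => [EJ|nJ]; last by rewrite mulr0n scaler0.
exfalso.
have iK := okm_inj oK.
have cK : #|K| = #|J| by rewrite EJ card_in_imset.
move: hK; rewrite /deglex_lt cK ltnn eqxx /= => /exists_inP [x].
rewrite inE => /andP [xJ xK] /forallP Hx.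
have ex := okm_def oK xK.
have pJ : pp lvl x \in J by rewrite EJ imset_f.
have le1 := lvl_le ex.
have px : pp lvl x != x by apply/negP => /eqP e; rewrite -e pJ in xJ.
have pK : pp lvl x \notin K.
  apply/negP => pK; have := iK _ _ pK xK; rewrite pp_J // => /(_ erefl) e.
  by rewrite e eqxx in px.
have := Hx (pp lvl x); rewrite !inE pJ (negbTE pK) /= => le2.
have ee : pp lvl x = x by apply/le_anti; rewrite le1 le2.
by rewrite ee eqxx in px.
Qed.

Lemma nbc_false (f : ext) : os_ideal M f -> is_lead f J -> False.
Proof.
move=> hf [fJ Hlead].
have := congr1 (fun z : ext => z J) (psi_ideal hf).
rewrite /psi sum_ffunE ffunE (bigD1 J) //= big1 => [|K nK]; last first.
  rewrite ffunE; case: (eqVneq (f K) 0) => [->|fK]; first by rewrite scale0r.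
  case: (Hlead K fK) => [eK|lt]; first by rewrite eK eqxx in nK.
  by rewrite psim_K // scaler0.
have e1 : f J *: (true%:R : R^o) = f J by exact: mulr1.
by rewrite ffunE psim_J tmonE eqxx e1 addr0 => e; rewrite e eqxx in fJ.
Qed.

End Level.

End Matroid.

Section Deglex.

Lemma symdE (J K : {set S}) u :
  (u \in (J :\: K) :|: (K :\: J)) = (u \in J) (+) (u \in K).
Proof. by rewrite !inE; case: (u \in J); case: (u \in K). Qed.

Definition lexlt (J K : {set S}) : bool :=
  [exists x in J :\: K, [forall y in (J :\: K) :|: (K :\: J), (x <= y)%O]].

Lemma lexltP (J K : {set S}) : lexlt J K ->
  exists x, [/\ x \in J, x \notin K & forall u, (u < x)%O -> (u \in J) = (u \in K)].
Proof.
case/exists_inP => x; rewrite inE => /andP [xK xJ] /forall_inP H.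
exists x; split => // u ux; apply/eqP/negP => ne.
have := H u; rewrite symdE.
have -> : (u \in J) (+) (u \in K) by move: ne; case: (u \in J); case: (u \in K).
by move=> /(_ isT); rewrite leNgt ux.
Qed.

Lemma lexltI (J K : {set S}) x : x \in J -> x \notin K ->
  (forall u, (u < x)%O -> (u \in J) = (u \in K)) -> lexlt J K.
Proof.
move=> xJ xK H; apply/exists_inP; exists x; first by rewrite inE xJ xK.
apply/forall_inP => u; rewrite symdE => hu.
rewrite leNgt; apply/negP => ux; move: hu; rewrite (H u ux).
by case: (u \in K).
Qed.

Lemma lexlt_trans (J K L : {set S}) : lexlt J K -> lexlt K L -> lexlt J L.
Proof.
move=> /lexltP [x [xJ xK Hx]] /lexltP [y [yK yL Hy]].
case: (ltgtP x y) => hxy.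
- apply: (lexltI (x := x)) => //.
    by rewrite -(Hy x hxy).
  by move=> u ux; rewrite (Hx u ux) (Hy u (lt_trans ux hxy)).
- apply: (lexltI (x := y)) => //.
    by rewrite (Hx y hxy).
  by move=> u uy; rewrite (Hx u (lt_trans uy hxy)) (Hy u uy).
- by rewrite hxy yK in xK.
Qed.

Lemma lexlt_irr (J : {set S}) : ~~ lexlt J J.
Proof. by apply/negP => /lexltP [x [xJ xK _]]; rewrite xJ in xK. Qed.

Lemma deglexE (J K : {set S}) :
  deglex_lt J K = (#|J| < #|K|)%N || ((#|J| == #|K|) && lexlt J K).
Proof. by []. Qed.

Lemma deglex_trans (J K L : {set S}) : deglex_lt J K -> deglex_lt K L -> deglex_lt J L.
Proof.
rewrite !deglexE => /orP [h1|/andP [/eqP e1 l1]] /orP [h2|/andP [/eqP e2 l2]].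
- by rewrite (ltn_trans h1 h2).
- by rewrite -e2 h1.
- by rewrite e1 h2.
- by rewrite e1 e2 eqxx (lexlt_trans l1 l2) orbT.
Qed.

Lemma deglex_irr (J : {set S}) : ~~ deglex_lt J J.
Proof. by rewrite deglexE ltnn eqxx (negbTE (lexlt_irr J)). Qed.

Lemma deglex_ind (P : {set S} -> Prop) :
  (forall J, (forall K, deglex_lt K J -> P K) -> P J) -> forall J, P J.
Proof.
move=> IH J.
have [n] := ubnP #|[set K | deglex_lt K J]|.
elim: n J => // n IHn J hn; apply: IH => K hK; apply: IHn.
move: hn; rewrite ltnS; apply: leq_trans; apply: proper_card; apply/properP; split.
  by apply/subsetP => K'; rewrite !inE => h; apply: deglex_trans h hK.
by exists K; rewrite !inE ?hK // (negbTE (deglex_irr K)).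
Qed.

End Deglex.

Lemma drop_min_mono (C J : {set S}) : C \subset J -> drop_min C \subset drop_min J.
Proof.
move=> sCJ; apply/subsetP => x; rewrite !inE => /andP [xC /exists_inP [y yC yx]].
rewrite (subsetP sCJ x xC) /=; apply/exists_inP; exists y => //.
exact: (subsetP sCJ).
Qed.

Lemma mbar_red (M Mbar : {set {set S}}) : groebner_circuits_spec M Mbar ->
  forall J, dependent M J -> exists2 K, K \in M :&: Mbar & drop_min K \subset drop_min J.
Proof.
move=> hMbar; apply: deglex_ind => J IH dJ.
case JMb: (J \in Mbar).
  case/exists_inP: dJ => C CM sCJ.
  case: (eqVneq C J) => [eCJ|nCJ].
    by exists J; rewrite ?inE -?eCJ ?CM ?eCJ.
  have lt : deglex_lt C J.
    rewrite deglexE; apply/orP; left; apply: proper_card; rewrite properEneq nCJ sCJ.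
    by [].
  have dC : dependent M C by apply/exists_inP; exists C.
  case: (IH C lt dC) => K KM sK; exists K => //.
  exact: subset_trans sK (drop_min_mono sCJ).
move: JMb; rewrite hMbar dJ /= => /negbFE /exists_inP [K KMb /andP [lt cv]].
have dK : dependent M K by move: KMb; rewrite hMbar => /andP [].
case: (IH K lt dK) => K' K'M sK'; exists K' => //.
by apply: (subset_trans sK'); case/andP: cv.
Qed.

Lemma os_genE (K L : {set S}) :
  os_gen R K L = \sum_(j in K) (-1) ^+ #|[set i in K | (i < j)%O]| * (L == K :\ j)%:R.
Proof. by rewrite /os_gen sum_ffunE; apply: eq_bigr => j _; rewrite ffunE tmonE. Qed.

Lemma lead_os_gen (K : {set S}) : K != set0 -> (1 != 0 :> R) ->
  is_lead (os_gen R K) (drop_min K).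
Proof.
move=> /set0Pn [x0 x0K] nt.
case: (ex_minP id x0K) => m mK Hm.
have dK : drop_min K = K :\ m.
  apply/setP => x; rewrite !inE; apply/andP/andP => [[xK /exists_inP [y yK yx]]|[xm xK]].
    split=> //; apply/negP => /eqP e; move: (Hm y yK); rewrite -e /= leNgt yx.
    by [].
  split=> //; apply/exists_inP; exists m => //.
  by rewrite lt_neqAle eq_sym xm (Hm x xK).
have delinj : forall j, j \in K -> (K :\ m == K :\ j) = (j == m).
  move=> j jK; apply/eqP/eqP => [e|->] //.
  apply/eqP; apply/negPn/negP => jm; move/setP: e => /(_ j).
  by rewrite !inE eqxx jm jK.
split.
  rewrite dK os_genE (bigD1 m) //= big1 => [|j /andP [jK jm]]; last first.
    by rewrite delinj // (negbTE jm) mulr0.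
  rewrite eqxx mulr1 addr0.
  have -> : #|[set i in K | (i < m)%O]| = 0%N.
    apply/eqP; rewrite cards_eq0; apply/eqP/setP => i; rewrite !inE.
    by apply/negP => /andP [iK im]; move: (Hm i iK); rewrite /= leNgt im.
  by rewrite expr0.
move=> L; rewrite os_genE.
case: (boolP [exists j in K, L == K :\ j]) => [/exists_inP [j jK /eqP ->]|/exists_inPn H]; last first.
  by rewrite big1 ?eqxx // => j jK; rewrite (negbTE (H j jK)) mulr0.
move=> _; case: (eqVneq j m) => [->|jm]; first by left.
right; rewrite dK deglexE; apply/orP; right.
have ecard : #|K :\ j| = #|K :\ m|.
  by move: (cardsD1 j K) (cardsD1 m K); rewrite jK mK /=; lia.
rewrite ecard eqxx /=.
apply: (lexltI (x := m)).
- by rewrite !inE mK eq_sym jm.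
- by rewrite !inE eqxx.
move=> u um; rewrite !inE.
have uj : u != j by apply/negP => /eqP e; move: (Hm j jK); rewrite /= -e leNgt um.
have uK : (u \in K) = false.
  by apply/negP => uK; move: (Hm u uK); rewrite /= leNgt um.
by rewrite uK !andbF.
Qed.

End Ext.

Section Final.
Context {d : Order.disp_t} (S : finOrderType d) (R : comPzRingType).
Local Notation ext := {ffun {set S} -> R^o}.

Lemma gen_ideal_mono (P Q : ext -> Prop) (x : ext) :
  (forall m, P m -> Q m) -> gen_ideal P x -> gen_ideal Q x.
Proof.
move=> PQ [n [a [g [b [Hg ->]]]]].
by exists n, a, g, b; split => // i; apply: PQ.
Qed.

Lemma gen_ideal_trans (P Q : ext -> Prop) (x : ext) :
  (forall m, P m -> exists u g v, Q g /\ m = emul (emul u g) v) ->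
  gen_ideal P x -> gen_ideal Q x.
Proof.
move=> PQ [n [a [m [b [Hm ->]]]]].
have : forall i : 'I_n, exists t : ext * ext * ext,
    Q t.1.2 /\ m i = emul (emul t.1.1 t.1.2) t.2.
  move=> i; have [u [g [v [Qg e]]]] := PQ _ (Hm i).
  by exists (u, g, v).
case/fin_all_exists => t Ht.
exists n, (fun i => emul (a i) (t i).1.1), (fun i => (t i).1.2), (fun i => emul (t i).2 (b i)).
split; first by move=> i; case: (Ht i).
apply: eq_bigr => i _; case: (Ht i) => _ ->.
by rewrite !emul_assoc.
Qed.

Lemma os_gen_in_ideal (M : {set {set S}}) (J : {set S}) :
  J \in M -> os_ideal (R:=R) M (os_gen R J).
Proof.
move=> JM; exists 1%N, (fun=> tmon R set0), (fun=> os_gen R J), (fun=> tmon R set0).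
split; first by move=> i; exists J.
by rewrite big_ord1 emul1l emul1r.
Qed.

Lemma sign_sq (n : nat) : (-1) ^+ n * (-1) ^+ n = 1 :> R.
Proof. by rewrite -exprD addnn -signr_odd odd_double expr0. Qed.

End Final.

Theorem corollary1p6 (d : Order.disp_t) (S : finOrderType d) (R : comPzRingType)
    (M Mbar : {set {set S}})
    (hM : is_circuit_system M) (hMbar : groebner_circuits_spec M Mbar) :
  groebner_basis (fun g : ext S R => exists2 J, J \in M :&: Mbar & g = os_gen R J)
                 (os_ideal (R:=R) M).
Proof.
split.
  move=> g [J JMM ->]; apply: os_gen_in_ideal.
  by case/setIP: JMM.
move=> x; split.
  apply: gen_ideal_mono => m [f [[J JMM ->] [J' [hl ->]]]].
  exists (os_gen R J); split; last by exists J'.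
  by apply: os_gen_in_ideal; case/setIP: JMM.
case: (eqVneq (1 : R) 0) => [t0|nt].
  have x0 : x = 0.
    apply/ffunP => K; rewrite ffunE.
    by rewrite -[x K]mulr1 t0 mulr0.
  move=> _; rewrite x0.
  exists 0%N, (fun=> 0), (fun=> 0), (fun=> 0); split; first by case.
  by rewrite big_ord0.
apply: gen_ideal_trans => m [f [hf [J [hl ->]]]].
case: (boolP [exists C in M, drop_min C \subset J]) => [/exists_inP [C CM sC] | /exists_inPn H];
  last by exfalso; apply: (nbc_false hM H hf hl).
have dC : dependent M C by apply/exists_inP; exists C.
case: (mbar_red hMbar dC) => K KMM sK.
have KM : K \in M by case/setIP: KMM.
set D := drop_min K.
have sDJ : D \subset J by apply: subset_trans sK sC.
exists ((-1) ^+ inv_count (J :\: D) D *: tmon R (J :\: D)), (tmon R D), (tmon R set0).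
split.
  exists (os_gen R K); split; first by exists K.
  exists D; split => //; apply: lead_os_gen => //.
  case: hM => hsz _ _; apply/negP => /eqP K0.
  by move: (hsz K KM); rewrite K0 cards0.
rewrite emul1r emulZl emul_tmon /mono_mul.
have -> : [disjoint J :\: D & D].
  by rewrite disjoints_subset; apply/subsetP => y; rewrite in_setD in_setC => /andP [].
have -> : (J :\: D) :|: D = J.
  apply/setP => y; rewrite in_setU in_setD; case yD: (y \in D); rewrite ?orbT ?orbF //=.
  by rewrite (subsetP sDJ y yD).
by rewrite scalerA sign_sq scale1r.
Qed.
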